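(* Let $U$ satisfy the standing assumption below with constant $c$. The set of exponential stopping times $$E=\{t:\ t=t_p\text{ for some program }p\text{ with }t_p>2^{2|p|+2c+1}\}$$ has effective zero density. That is, there is a computable function $B$ such that for every $k\ge1$ and every $T>B(k)$, $$\#\{t\in E:1\le t\le T\}/T<2^{-k}.$$
   Context: Strings are binary and $|x|$ is the length of $x$. $\mathrm{bin}:\{1,2,\dots\}\to\Sigma^*$ sends $n$ to its binary expansion with the leading $1$ removed. $U$ is a fixed universal Turing machine, and $\nabla(x)=\min\{n\ge1:U(\mathrm{bin}(n))=x\}$. $t_p$ is the exact step at which $U(p)$ halts, with $t_p=\infty$ if it never halts. Standing assumption: there is a computable transformation $p\mapsto time(p)$ and a positive integer constant $c$ such that, for every program $p$: (i) $U(p)$ halts if and only if $U(time(p))$ halts; (ii) $|time(p)|\le|p|+c$; (iii) if $U(p)$ halts, then $U(time(p))=\mathrm{bin}(t_p)$. *)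

(* Defs.v *)
From mathcomp Require Import all_boot all_algebra.
From Stdlib Require BinNat BinPos List.
From mathcomp Require Import boolp.

Set Implicit Arguments.
Unset Strict Implicit.
Unset Printing Implicit Defensive.

(* binary expansion of a positive number, leading 1 removed *)
Fixpoint binpos (p : BinNums.positive) : seq bool :=
  match p with
  | BinNums.xH => [::]
  | BinNums.xO q => rcons (binpos q) false
  | BinNums.xI q => rcons (binpos q) true
  end.

(* bin : {1,2,...} -> Sigma^*  (bin 0 is an irrelevant default [::]) *)
Definition bin (n : nat) : seq bool :=
  match BinNat.N.of_nat n with
  | BinNums.N0 => [::]
  | BinNums.Npos p => binpos p
  end.

(* inverse encoding of strings as positive naturals: the number whose binary
   expansion is 1 followed by s; bin (strcode s) = s *)
Definition strcode (s : seq bool) : nat :=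
  foldl (fun acc (b : bool) => (2 * acc + b)%N) 1%N s.

Inductive rcode : Type :=
| RZero
| RSucc
| RProj (i : nat)
| RComp (f : rcode) (gs : list rcode)
| RPrec (f g : rcode)
| RMu (f : rcode).

Inductive reval : rcode -> list nat -> nat -> Prop :=
| reZero v : reval RZero v 0
| reSucc x v : reval RSucc (x :: v) x.+1
| reProj i v : (i < size v)%N -> reval (RProj i) v (nth 0%N v i)
| reComp f gs v ys y :
    List.Forall2 (fun g y => reval g v y) gs ys -> reval f ys y ->
    reval (RComp f gs) v y
| rePrec0 f g v y : reval f v y -> reval (RPrec f g) (0%N :: v) y
| rePrecS f g n v r y :
    reval (RPrec f g) (n :: v) r -> reval g (n :: r :: v) y ->
    reval (RPrec f g) (n.+1 :: v) y
| reMu f v n :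
    reval f (n :: v) 0 ->
    (forall m, (m < n)%N -> exists r, r <> 0%N /\ reval f (m :: v) r) ->
    reval (RMu f) v n.

Definition computable (B : nat -> nat) : Prop :=
  exists e : rcode, forall n, reval e [:: n] (B n).

Definition str_computable (F : seq bool -> seq bool) : Prop :=
  exists G : nat -> nat, computable G /\ forall s, strcode (F s) = G (strcode s).

(* A machine is modeled by its step-bounded run:
   run p n = Some x  iff  U(p) has halted within n steps with output x. *)
Definition machine := seq bool -> nat -> option (seq bool).

(* well-formedness: once halted, stays halted with the same output;
   no program halts at step 0 (steps are counted from 1). *)
Definition machine_wf (run : machine) : Prop :=
  (forall p n x, run p n = Some x -> run p n.+1 = Some x) /\
  (forall p, run p 0%N = None).

Definition halts (run : machine) (p : seq bool) : Prop :=
  exists n x, run p n = Some x.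

Definition halts_at (run : machine) (p : seq bool) (t : nat) : Prop :=
  run p t <> None /\ forall s, (s < t)%N -> run p s = None.

Definition outputs (run : machine) (p x : seq bool) : Prop :=
  exists n, run p n = Some x.

Definition standing_assumption (run : machine) (c : nat) : Prop :=
  exists time : seq bool -> seq bool,
    str_computable time /\
    (forall p, halts run p <-> halts run (time p)) /\
    (forall p, (size (time p) <= size p + c)%N) /\
    (forall p t, halts_at run p t -> outputs run (time p) (bin t)).

Definition exp_stopping_time (run : machine) (c t : nat) : Prop :=
  exists p, halts_at run p t /\ (2 ^ (2 * size p + 2 * c + 1) < t)%N.

Definition count_E (run : machine) (c T : nat) : nat :=
  count (fun t => `[< exp_stopping_time run c t >]) (iota 1 T).

(* Main.v *)
Require Import Defs.
From mathcomp Require Import all_boot all_algebra.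
From mathcomp Require Import boolp zify.
Import GRing.Theory Num.Theory.

Definition ADD := RPrec (RProj 0) (RComp RSucc [:: RProj 1]).

Lemma ADD_ok a b : reval ADD [:: a; b] (a + b).
Proof.
elim: a => [|a IH]; first by apply: rePrec0; by apply: (@reProj 0 [:: b]).
apply: rePrecS IH _.
apply: (reComp (ys := [:: a + b])); last by rewrite addSn; apply: reSucc.
by constructor; [by apply: (@reProj 1 [:: a; a + b; b]) | constructor].
Qed.

Definition BC := RPrec (RComp RSucc [:: RComp RSucc [:: RZero]])
  (RComp ADD [:: RComp ADD [:: RProj 1; RProj 1]; RComp ADD [:: RProj 1; RProj 1]]).

Lemma BC_ok : computable (fun k => 2 * 4 ^ k).
Proof.
exists BC => n; elim: n => [|n IH].
  apply: rePrec0; apply: (reComp (ys := [:: 1])); last exact: reSucc.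
  constructor; last constructor.
  apply: (reComp (ys := [:: 0])); last exact: reSucc.
  by constructor; [constructor | constructor].
apply: rePrecS IH _.
set r := 2 * 4 ^ n.
have H2 : reval (RComp ADD [:: RProj 1; RProj 1]) [:: n; r] (r + r).
  apply: (reComp (ys := [:: r; r])); last exact: ADD_ok.
  by constructor; [by apply: (@reProj 1 [:: n; r]) | constructor;
    [by apply: (@reProj 1 [:: n; r]) | constructor]].
have -> : 2 * 4 ^ n.+1 = (r + r) + (r + r) by rewrite /r expnS; lia.
apply: (reComp (ys := [:: r + r; r + r])); last exact: ADD_ok.
by constructor; [exact: H2 | constructor; [exact: H2 | constructor]].
Qed.

Lemma binpos_inj : injective binpos.
Proof.
elim=> [p IH|p IH|] [q|q|] //= H;
  try (by case: (rcons_inj H) => /IH ->);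
  try (by case: (rcons_inj H));
  by move: H; case: (binpos _) => //.
Qed.

Lemma bin_inj t1 t2 : 0 < t1 -> 0 < t2 -> bin t1 = bin t2 -> t1 = t2.
Proof.
rewrite /bin => h1 h2.
case E1: (BinNat.N.of_nat t1) => [|p1]; first by move: E1; case: t1 h1.
case E2: (BinNat.N.of_nat t2) => [|p2]; first by move: E2; case: t2 h2.
move/binpos_inj => e; subst.
by apply: Nnat.Nat2N.inj; rewrite E1 E2.
Qed.

Lemma run_mono run : machine_wf run -> forall p n x m, run p n = Some x -> n <= m -> run p m = Some x.
Proof.
case=> hm _ p n x m h; elim: m => [|m IH]; first by rewrite leqn0 => /eqP <-.
rewrite leq_eqVlt => /orP [/eqP <- //|]; rewrite ltnS => /IH; exact: hm.
Qed.

Lemma outputs_uniq run q x y : machine_wf run -> outputs run q x -> outputs run q y -> x = y.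
Proof.
move=> wf [n hn] [m hm].
have := @run_mono run wf _ _ _ _ hn (leq_maxl n m); rewrite (@run_mono run wf _ _ _ _ hm (leq_maxr n m)).
by case.
Qed.

Fixpoint allstr n : seq (seq bool) :=
  if n is n'.+1 then [seq b :: s | b <- [:: true; false], s <- allstr n'] else [:: [::]].

Lemma size_allstr n : size (allstr n) = 2 ^ n.
Proof. elim: n => //= n IH; rewrite size_cat !size_map IH expnS cats0 size_map; lia. Qed.

Lemma mem_allstr s : s \in allstr (size s).
Proof.
elim: s => // b s IH; rewrite [size _]/=; change (b :: s \in [seq b :: s | b <- [:: true; false], s <- allstr (size s)]); apply/allpairsP; exists (b, s) => /=.
by split => //; case: b.
Qed.

Fixpoint allupto n : seq (seq bool) :=
  if n is n'.+1 then allstr n ++ allupto n' else allstr 0.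

Lemma size_allupto n : size (allupto n) < 2 ^ n.+1.
Proof.
elim: n => //= n IH; rewrite size_cat (size_allstr n.+1) expnS; move: IH; rewrite !expnS; lia.
Qed.

Lemma mem_allupto s n : size s <= n -> s \in allupto n.
Proof.
elim: n => [|n IH]; first by case: s.
rewrite leq_eqVlt mem_cat => /orP [/eqP e|]; first by rewrite -e mem_allstr.
by rewrite ltnS => /IH ->; rewrite orbT.
Qed.

Lemma rat_bound (a b m : nat) : (a * 2 ^ m < b)%N -> (a%:R / b%:R < (2%:R ^- m : rat))%R.
Proof.
move=> h.
have b0 : ((0 : rat) < b%:R)%R by rewrite ltr0n; case: b h => //; rewrite ltn0.
rewrite ltr_pdivrMr // mulrC ltr_pdivlMr ?exprn_gt0 ?ltr0n //.
by rewrite -natrX -natrM ltr_nat.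
Qed.

Theorem mainTheorem9 (run : machine) (c : nat) :
  machine_wf run -> (0 < c)%N -> standing_assumption run c ->
  exists B : nat -> nat, computable B /\
    forall k : nat, (1 <= k)%N -> forall T : nat, (B k < T)%N ->
      ((count_E run c T)%:R / T%:R < (2%:R ^- k : rat))%R.
Proof.
move=> wf _ [time [_ [_ [hsz hout]]]].
exists (fun k => 2 * 4 ^ k); split; first exact: BC_ok.
move=> k _ T hT.
have [f hf] : exists f : nat -> seq bool, forall t, exp_stopping_time run c t ->
    outputs run (f t) (bin t) /\ (2 ^ (2 * size (f t) + 1) < t)%N.
  have H : forall t, exists q, exp_stopping_time run c t ->
    outputs run q (bin t) /\ (2 ^ (2 * size q + 1) < t)%N.
    move=> t; case: (pselect (exp_stopping_time run c t)) => [[p [hp hlt]]|hn];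
      last by exists [::].
    exists (time p) => _; split; first exact: hout.
    apply: leq_ltn_trans hlt; rewrite leq_exp2l //; have := hsz p; lia.
  case: (choice H) => f hf.
  by exists f.
have hk : (2 ^ (2 * k + 1) < T)%N by move: hT; rewrite expnD expnM mulnC.
pose P := fun n => (2 ^ (2 * n + 1) < T)%N.
have exP : exists n, P n by exists 0%N; rewrite /P; move: hk; rewrite expnD; 
  have := expn_gt0 2 (2 * k); lia.
have ubP : forall n, P n -> (n <= T)%N.
  move=> n hn; apply: ltnW; apply: leq_ltn_trans hn.
  apply: leq_trans (ltnW (ltn_expl n (isT : (1 < 2)%N))) _.
  rewrite leq_exp2l //; lia.
case: (ex_maxnP exP ubP) => L hL hmax.
set S := [seq t <- iota 1 T | `[< exp_stopping_time run c t >]].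
have hcount : count_E run c T = size S by rewrite /count_E size_filter.
have memS : forall t, t \in S -> exp_stopping_time run c t /\ (0 < t <= T)%N.
  move=> t; rewrite mem_filter mem_iota => /andP [/asboolP h /andP [h1 h2]].
  by split => //; rewrite h1 /=; move: h2; rewrite add1n ltnS.
have hS : (size S <= size (allupto L))%N.
  rewrite -(size_map f); apply: uniq_leq_size.
    rewrite map_inj_in_uniq; first by apply: filter_uniq; exact: iota_uniq.
    move=> t1 t2 /memS [e1 /andP [p1 _]] /memS [e2 /andP [p2 _]] e.
    have [o1 _] := hf _ e1; have [o2 _] := hf _ e2.
    rewrite e in o1; apply: bin_inj => //; exact: outputs_uniq wf o1 o2.
  move=> q /mapP [t /memS [e /andP [_ tT]] ->].
  apply: mem_allupto; apply: hmax; rewrite /P.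
  by have [_ h] := hf _ e; apply: leq_trans h tT.
rewrite hcount; apply: rat_bound.
have hsL := size_allupto L.
apply: (@leq_trans (2 ^ (L.+1 + k))).
  by rewrite expnD ltn_pmul2r ?expn_gt0 //; apply: leq_ltn_trans hS hsL.
case: (leqP L k) => hLk.
  apply: leq_trans (ltnW hk); rewrite leq_exp2l //; lia.
apply: leq_trans (ltnW hL); rewrite leq_exp2l //; lia.
Qed.
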